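(* Let $\alpha,\beta,\gamma,x\in\mathbb{N}_0$ with $(\alpha,\beta,\gamma,x)\neq(0,0,0,0)$, let $\lambda$ be a nonnegative integer and $n$ a nonnegative integer. Then $$A^{\lambda,x}_{n+1}(\alpha,\beta,\gamma)=\gamma\, A^{\lambda,x}_{n}(\alpha,\beta,\gamma+\alpha)+\sum_{k=0}^{n}\binom{n}{k}A^{0,x}_k(\alpha,\beta,\gamma)\,A^{\lambda,x}_{n-k+1}(\alpha,\beta,0).$$
   Context: For a number $t$ and $\alpha$, the generalised factorial is $(t|\alpha)_n=\prod_{j=0}^{n-1}(t-j\alpha)$ for $n\ge 1$ and $(t|\alpha)_0=1$. For parameters $\alpha,\beta,\gamma$, the generalised Stirling numbers $S(n,k,\alpha,\beta,\gamma)$ ($0\le k\le n$) are defined by the polynomial identity $(t|\alpha)_n=\sum_{k=0}^{n}S(n,k,\alpha,\beta,\gamma)\,(t-\gamma|\beta)_k$ in the variable $t$. For a nonnegative integer $\lambda$ put $\binom{k+\lambda-1}{k}=\lambda(\lambda+1)\cdots(\lambda+k-1)/k!$ (equal to $1$ for $k=0$, and for $\lambda=0$ equal to $0$ for $k\ge1$). Define $$A^{\lambda,x}_n(\alpha,\beta,\gamma)=\sum_{k=0}^{n}\binom{k+\lambda-1}{k}(-1)^{n+k}\beta^k k!\,S(n,k,\alpha,-\beta,-\gamma)\,x^k .$$ *)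

(* Defs.v *)
From mathcomp Require Import all_boot all_algebra.
Set Implicit Arguments. Unset Strict Implicit. Unset Printing Implicit Defensive.
Import GRing.Theory Num.Theory.
Local Open Scope ring_scope.

(* generalised factorial (t - c | b)_n as a polynomial in t over int:
   prod_{j<n} (t - c - j b).  (t|a)_n is gfact_shift a 0 n. *)
Definition gfact_shift (b c : int) (n : nat) : {poly int} :=
  \prod_(j < n) ('X - (c + j%:Z * b)%:P).

(* S is "the" generalised Stirling family: for all parameters (a,b,c),
   (t|a)_n = sum_{k=0}^n S a b c n k (t - c | b)_k as polynomials in t. *)
Definition is_gen_stirling (S : int -> int -> int -> nat -> nat -> int) : Prop :=
  forall (a b c : int) (n : nat),
    gfact_shift a 0 n = \sum_(k < n.+1) (S a b c n k) *: gfact_shift b c k.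

Definition Apoly (S : int -> int -> int -> nat -> nat -> int)
  (lam : nat) (x : int) (n : nat) (a b c : int) : int :=
  \sum_(k < n.+1) ('C(k + lam - 1, k))%:R * (-1) ^+ (n + k) * b ^+ k
     * (k`!)%:R * S a (- b) (- c) n k * x ^+ k.

(* Main.v *)
Require Import Defs.
From mathcomp Require Import all_boot all_algebra.
From mathcomp Require Import ring.
Set Implicit Arguments. Unset Strict Implicit.
Import GRing.Theory Num.Theory.
Local Open Scope ring_scope.

Definition Pg (R : comNzRingType) (A y : R) (n : nat) : R := \prod_(i < n) (y - i%:R * A).

Lemma Pg0 (R : comNzRingType) (A y : R) : Pg A y 0 = 1.
Proof. by rewrite /Pg big_ord0. Qed.

Lemma PgS (R : comNzRingType) (A y : R) n : Pg A y n.+1 = Pg A y n * (y - n%:R * A).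
Proof. by rewrite /Pg big_ord_recr. Qed.

Lemma PgSl (R : comNzRingType) (A y : R) n : Pg A y n.+1 = y * Pg A (y - A) n.
Proof.
rewrite /Pg big_ord_recl /= mul0r subr0; congr (_ * _).
apply: eq_bigr => i _; rewrite /bump /= add1n -addn1 natrD; ring.
Qed.

Lemma vander (R : comNzRingType) (A u v : R) n :
  Pg A (u + v) n = \sum_(j < n.+1) 'C(n, j)%:R * Pg A u j * Pg A v (n - j).
Proof.
elim: n => [|n IHn]; first by rewrite big_ord_recl big_ord0 !Pg0 bin0 addr0 !mulr1.
rewrite PgS IHn big_distrl /=.
have E : forall j : 'I_n.+1, 'C(n, j)%:R * Pg A u j * Pg A v (n - j) * (u + v - n%:R * A)
   = 'C(n, j)%:R * Pg A u j.+1 * Pg A v (n - j) + 'C(n, j)%:R * Pg A u j * Pg A v (n - j).+1.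
  move=> j; rewrite !PgS.
  have -> : (n%:R : R) = j%:R + (n - j)%:R by rewrite -natrD subnKC // -ltnS.
  ring.
rewrite (eq_bigr _ (fun j _ => E j)) big_split /=.
rewrite [in RHS]big_ord_recl /= bin0 subn0 Pg0 mul1r.
under [in RHS]eq_bigr => i _ do rewrite /bump /= add1n binS subSS natrD !mulrDl.
rewrite big_split /= [RHS]addrA [RHS]addrC; congr (_ + _).
rewrite big_ord_recl /= bin0 subn0 Pg0 !mul1r; congr (_ + _).
rewrite big_ord_recr /= bin_small // !mul0r addr0.
apply: eq_bigr => i _; rewrite /bump /= add1n subnSK //.
Qed.

Lemma size_gfs (b c : int) k : size (gfact_shift b c k) = k.+1.
Proof. by rewrite /gfact_shift -(big_mkord xpredT (fun j : nat => ('X - (c + j%:Z * b)%:P))) size_prod_XsubC size_iota subn0. Qed.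

Lemma lead_gfs (b c : int) k : lead_coef (gfact_shift b c k) = 1.
Proof. by rewrite /gfact_shift lead_coef_prod_XsubC. Qed.

Lemma uniq_basis (b c : int) m (f : nat -> int) :
  \sum_(k < m) f k *: gfact_shift b c k = 0 -> forall k, (k < m)%N -> f k = 0.
Proof.
elim: m => [|m IH] H k; first by [].
rewrite big_ord_recr /= in H.
have Hm : f m = 0.
  have := congr1 (fun p : {poly int} => p`_m) H.
  rewrite coefD coefZ coef_sum coef0 big1.
    by rewrite add0r -[m in _`_m]/((m.+1).-1) -(size_gfs b c m) -/(lead_coef _) lead_gfs mulr1.
  move=> i _; rewrite coefZ nth_default ?mulr0 // size_gfs; exact: ltn_ord.
rewrite ltnS leq_eqVlt => /orP [/eqP -> //|]; apply: IH.
by move: H; rewrite Hm scale0r addr0.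
Qed.

Lemma gfs_Pg (a c : int) n : gfact_shift a c n = Pg (a%:P) ('X - c%:P) n.
Proof.
rewrite /gfact_shift /Pg; apply: eq_bigr => i _.
rewrite polyCD polyCM -natz rmorph_nat; ring.
Qed.

Lemma comp_sum m (F : nat -> {poly int}) r :
  (\sum_(k < m) F k) \Po r = \sum_(k < m) (F k \Po r).
Proof. exact: raddf_sum. Qed.

Lemma gfs_comp (b c d : int) k :
  gfact_shift b c k \Po ('X + d%:P) = gfact_shift b (c - d) k.
Proof.
rewrite /gfact_shift rmorph_prod; apply: eq_bigr => i _ /=.
rewrite comp_polyB comp_polyX comp_polyC !polyCD polyCN; ring.
Qed.

Section Conv.
Variable S : int -> int -> int -> nat -> nat -> int.
Hypothesis HS : is_gen_stirling S.

Lemma expand_c (a b c : int) m :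
  Pg (a%:P) ('X - c%:P) m = \sum_(k < m.+1) S a b 0 m k *: gfact_shift b c k.
Proof.
have := congr1 (comp_poly ('X + (- c)%:P)) (HS a b 0 m).
rewrite gfs_comp raddf_sum sub0r opprK gfs_Pg => ->.
apply: eq_bigr => k _ /=; by rewrite linearZ /= gfs_comp sub0r opprK.
Qed.

Definition S0e (a b : int) (m k : nat) : int := if (k <= m)%N then S a b 0 m k else 0.

Lemma widen (a b c : int) m n : (m <= n)%N ->
  \sum_(k < n.+1) S0e a b m k *: gfact_shift b c k
  = \sum_(k < m.+1) S a b 0 m k *: gfact_shift b c k.
Proof.
move=> Hmn; rewrite (big_ord_widen n.+1 (fun k => S a b 0 m k *: gfact_shift b c k)) ?ltnS //.
rewrite [RHS]big_mkcond /=; apply: eq_bigr => k _; rewrite /S0e ltnS.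
by case: ifP => //; rewrite scale0r.
Qed.

Lemma conv (a b c : int) n k : (k <= n)%N ->
  S a b c n k = \sum_(j < n.+1) 'C(n, j)%:R * Pg a c j * S0e a b (n - j) k.
Proof.
move=> Hk; apply/eqP; rewrite -subr_eq0; apply/eqP.
pose f := fun k => S a b c n k - \sum_(j < n.+1) 'C(n, j)%:R * Pg a c j * S0e a b (n - j) k.
apply: (@uniq_basis b c n.+1 f); last by rewrite ltnS.
rewrite /f; under eq_bigr => i _ do rewrite scalerBl.
rewrite sumrB -HS; apply/eqP; rewrite subr_eq0; apply/eqP.
under eq_bigr => i _ do rewrite scaler_suml.
rewrite exchange_big /=.
rewrite gfs_Pg.
have -> : ('X : {poly int}) - 0%:P = c%:P + ('X - c%:P) by rewrite polyC0 subr0 addrC subrK.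
rewrite vander.
apply: eq_bigr => j _.
under eq_bigr => i _ do rewrite -scalerA.
rewrite -scaler_sumr widen; last by apply: leq_subr.
rewrite -expand_c -mul_polyC polyCM rmorph_nat; congr (_ * _ * _).
by rewrite /Pg rmorph_prod; apply: eq_bigr => i _ /=; rewrite rmorphB rmorphM rmorph_nat.
Qed.
End Conv.

Definition G (a g : int) (j : nat) : int := \prod_(i < j) (g + i%:R * a).

Lemma Pg_G (a g : int) j : Pg a (- g) j = (-1) ^+ j * G a g j.
Proof.
elim: j => [|j IH]; first by rewrite /Pg /G !big_ord0 mulr1.
rewrite /Pg /G !big_ord_recr /= -/(Pg a (-g) j) -/(G a g j) IH exprS; ring.
Qed.

Section Main.
Variable S : int -> int -> int -> nat -> nat -> int.
Hypothesis HS : is_gen_stirling S.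

Definition W (lam : nat) (x b : int) (m k : nat) (s : int) : int :=
  ('C(k + lam - 1, k))%:R * (-1) ^+ (m + k) * b ^+ k * (k`!)%:R * s * x ^+ k.

Lemma Apoly_ext lam x m N a b : (m <= N)%N ->
  Apoly S lam x m a b 0 = \sum_(k < N.+1) W lam x b m k (S0e S a (- b) m k).
Proof.
move=> HmN; rewrite /Apoly oppr0.
rewrite (big_ord_widen N.+1 (fun k : nat => W lam x b m k (S a (-b) 0 m k))) ?ltnS //.
rewrite big_mkcond /=; apply: eq_bigr => k _; rewrite /S0e ltnS.
by case: ifP => _; rewrite /W ?mulr0 ?mul0r.
Qed.

Lemma Aconv lam x N a b (g : int) :
  Apoly S lam x N a b g = \sum_(j < N.+1) 'C(N, j)%:R * G a g j * Apoly S lam x (N - j) a b 0.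
Proof.
under [RHS]eq_bigr => j _ do rewrite (@Apoly_ext lam x (N - j) N) ?leq_subr // big_distrr.
rewrite exchange_big /Apoly; apply: eq_bigr => k _ /=.
rewrite (conv HS); last by rewrite -ltnS.
rewrite mulr_sumr mulr_suml; apply: eq_bigr => j _.
rewrite Pg_G /W.
have -> : (N + k = j + (N - j + k))%N by rewrite addnA subnKC // -ltnS.
rewrite exprD.
set s := (-1) ^+ j : int.
have Hs : s * s = 1 by rewrite /s -exprMn mulrNN mulr1 expr1n.
set X := 'C(k + lam - 1, k)%:R * (-1) ^+ (N - j + k) * b ^+ k * k`!%:R * S0e S a (- b) (N - j) k * x ^+ k.
transitivity (s * s * ('C(N, j)%:R * G a g j * X)); first by rewrite /X; ring.
by rewrite Hs mul1r.
Qed.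

Lemma S_k0 a b c n : S a b c n 0 = Pg a c n.
Proof.
have := congr1 (fun p : {poly int} => p.[c]) (HS a b c n).
rewrite /= horner_sum big_ord_recl big1 ?addr0.
  rewrite hornerZ /gfact_shift big_ord0 hornerC mulr1 horner_prod => <-.
  by rewrite /Pg; apply: eq_bigr => i _; rewrite hornerXsubC add0r -natz.
move=> i _; rewrite hornerZ /gfact_shift horner_prod big_ord_recl /=.
by rewrite hornerXsubC mul0r addr0 subrr mul0r mulr0.
Qed.

Lemma A0 x k a b (g : int) : Apoly S 0 x k a b g = G a g k.
Proof.
rewrite /Apoly big_ord_recl big1 ?addr0.
  rewrite /= S_k0 Pg_G !expr0 !mulr1 mul1r mulrA -exprD addn0 addnn -signr_odd odd_double expr0 mul1r.
  by [].
move=> i _; rewrite lift0 addn0 subn1 /= bin_small //.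
by rewrite !mul0r.
Qed.

Lemma G_S a g j : G a g j.+1 = g * G a (g + a) j.
Proof.
rewrite /G big_ord_recl /= mul0r addr0; congr (_ * _).
apply: eq_bigr => i _; rewrite /bump /= add1n -addn1 natrD; ring.
Qed.

Lemma G0 a g : G a g 0 = 1.
Proof. by rewrite /G big_ord0. Qed.

End Main.

Unset Implicit Arguments.
Unset Strict Implicit.

Theorem theorem3 (S : int -> int -> int -> nat -> nat -> int)
  (HS : is_gen_stirling S)
  (alpha beta gamma x lam n : nat)
  (Hnz : (alpha, beta, gamma, x) <> (0%N, 0%N, 0%N, 0%N)) :
  Apoly S lam x%:Z n.+1 alpha%:Z beta%:Z gamma%:Z =
    gamma%:Z * Apoly S lam x%:Z n alpha%:Z beta%:Z (gamma + alpha)%:Z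
    + \sum_(k < n.+1) ('C(n, k))%:R * Apoly S 0 x%:Z k alpha%:Z beta%:Z gamma%:Z
                      * Apoly S lam x%:Z (n - k).+1 alpha%:Z beta%:Z 0.
Proof.
rewrite !(Aconv HS) PoszD.
under [X in _ = _ + X]eq_bigr => k _ do rewrite (A0 HS).
set g := gamma%:Z. set a := alpha%:Z.
rewrite big_ord_recl /= bin0 subn0 mul1r G0 mul1r.
under eq_bigr => i _ do rewrite /bump /= add1n binS subSS natrD !mulrDl G_S.
rewrite big_split /= mulr_sumr addrA [RHS]addrC; congr (_ + _); last first.
  by apply: eq_bigr => i _; ring.
rewrite [RHS]big_ord_recl /= bin0 subn0 G0 !mul1r.
congr (_ + _).
rewrite big_ord_recr /= bin_small // mul0r mul0r addr0.
apply: eq_bigr => i _ /=; by rewrite /bump /= add1n subnSK // G_S.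
Qed.
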